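(* The system ($m\mathcal{H}1$) $$u_2=v+t\frac{p-q}{s-t},\qquad v_1=u+s\frac{p-q}{s-t},\qquad s_2=\frac{1}{t}+\frac{p-q}{t(u-v)},\qquad t_1=\frac{1}{s}+\frac{p-q}{s(u-v)},$$ together with the constraint $tu=sv$ (or equivalently with the constraint $s_2u_2=t_1v_1$), leads to the integrable lattice equation $H1$: $(x_{12}-x)(x_1-x_2)=p-q$; that is, there is a potential function $x$ on the vertices with $u=x_1x$, $v=x_2x$, $s=x_1/x$, $t=x_2/x$, and in terms of $x$ the system is exactly $H1$.
   Context: $u,s$ are functions on horizontal edges and $v,t$ on vertical edges of the $\mathbb{Z}^2$ graph; for a square with lower-left vertex $(m,n)$, $u,s$ sit on the bottom edge, $v,t$ on the left edge, $u_2,s_2$ on the top edge, $v_1,t_1$ on the right edge; $p$ depends only on $m$, $q$ only on $n$. For a vertex function, $x=x_{m,n}$, $x_1=x_{m+1,n}$, $x_2=x_{m,n+1}$, $x_{12}=x_{m+1,n+1}$. *)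

(* Defs.v *)
From HB Require Import structures.
From mathcomp Require Import all_boot all_order all_algebra.
Set Implicit Arguments. Unset Strict Implicit. Unset Printing Implicit Defensive.
Import Order.TTheory GRing.Theory Num.Theory.
Local Open Scope ring_scope.

Section Defs.
Variable F : fieldType.

(* Edge functions: u, s on the horizontal edge from (m,n) to (m+1,n);
   v, t on the vertical edge from (m,n) to (m,n+1).
   p depends only on m, q only on n. *)

(* The system (mH1) on every elementary square with lower-left vertex (m,n):
   u_2 = u m (n+1), s_2 = s m (n+1), v_1 = v (m+1) n, t_1 = t (m+1) n. *)
Definition mH1_system (p q : int -> F) (u v s t : int -> int -> F) : Prop :=
  forall m n : int,
    [/\ u m (n + 1) = v m n + t m n * (p m - q n) / (s m n - t m n),
        v (m + 1) n = u m n + s m n * (p m - q n) / (s m n - t m n),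
        s m (n + 1) = 1 / t m n + (p m - q n) / (t m n * (u m n - v m n))
      & t (m + 1) n = 1 / s m n + (p m - q n) / (s m n * (u m n - v m n))].

Definition mH1_constraint (u v s t : int -> int -> F) : Prop :=
  forall m n : int, t m n * u m n = s m n * v m n.

Definition mH1_nondeg (u v s t : int -> int -> F) : Prop :=
  forall m n : int, [/\ s m n != 0, t m n != 0, s m n != t m n & u m n != v m n].

Definition is_potential (x u v s t : int -> int -> F) : Prop :=
  forall m n : int,
    [/\ x m n != 0,
        u m n = x (m + 1) n * x m n,
        v m n = x m (n + 1) * x m n,
        s m n = x (m + 1) n / x m n
      & t m n = x m (n + 1) / x m n].

Definition H1 (p q : int -> F) (x : int -> int -> F) : Prop :=
  forall m n : int,
    (x (m + 1) (n + 1) - x m n) * (x (m + 1) n - x m (n + 1)) = p m - q n.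

End Defs.

(* Main.v *)
Require Import Defs.
From HB Require Import structures.
From mathcomp Require Import all_boot all_order all_algebra.
From mathcomp Require Import ring zify.
Import GRing.Theory Num.Theory.
Local Open Scope ring_scope.

Lemma int_ind_iff (P : int -> Prop) : P 0 -> (forall n, P n <-> P (n + 1)) ->
  forall n, P n.
Proof.
move=> P0 HS [k|k].
  elim: k => // k IH. have -> : Posz k.+1 = Posz k + 1 by lia. exact: (HS (Posz k)).1.
elim: k => [|k IH]; first exact: (HS (Negz 0)).2.
have E : Negz k.+1 + 1 = Negz k by rewrite !NegzE; lia.
by apply: (HS (Negz k.+1)).2; rewrite E.
Qed.

Section Rec.
Variable F : fieldType.
Variables (a : int -> F) (c : F).
Fixpoint fpos (k : nat) : F := if k is k'.+1 then a (Posz k') * fpos k' else c.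
Fixpoint fneg (k : nat) : F := if k is k'.+1 then fneg k' / a (Negz k') else c.
Definition recf (z : int) : F := match z with Posz k => fpos k | Negz k => fneg k.+1 end.
Lemma recf0 : recf 0 = c. Proof. by []. Qed.
Lemma recfS : (forall m, a m != 0) -> forall m, recf (m + 1) = a m * recf m.
Proof.
move=> anz [k|k].
  have -> : Posz k + 1 = Posz k.+1 by lia. by [].
case: k => [|j].
  have -> : Negz 0 + 1 = 0 by []. by rewrite /= mulrC divfK.
have -> : Negz j.+1 + 1 = Negz j by rewrite !NegzE; lia.
rewrite /=. set w := fneg j / a (Negz j). by rewrite mulrC divfK.
Qed.
End Rec.

Arguments fpos {F}.
Arguments fneg {F}.
Arguments recf {F}.
Arguments recf0 {F}.
Arguments recfS {F a c}.

Lemma rec_uniq (F : fieldType) (a f g : int -> F) : (forall m, a m != 0) ->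
  f 0 = g 0 -> (forall m, f (m + 1) = a m * f m) -> (forall m, g (m + 1) = a m * g m) ->
  forall m, f m = g m.
Proof.
move=> anz e0 hf hg; apply: int_ind_iff => // n; rewrite hf hg; split=> [->//|].
exact: mulfI.
Qed.
Arguments rec_uniq {F a f g}.

Lemma key1 (F : fieldType) (a b c d P : F) : a != 0 -> c != 0 -> b != c ->
  (d * c = c * a + c / a * P / (b / a - c / a)) <-> ((d - a) * (b - c) = P).
Proof.
move=> an cn bc; have bc' : b - c != 0 by rewrite subr_eq0.
have E : b / a - c / a = (b - c) / a by rewrite mulrBl.
rewrite E; split=> H.
  apply: (mulfI cn); have -> : c * ((d - a) * (b - c)) = (d * c - c * a) * (b - c) by ring.
  rewrite H; field; rewrite bc' an //.
rewrite -H; field. by rewrite bc' an.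
Qed.
Arguments key1 {F a b c d P}.

Lemma key2 (F : fieldType) (a b c d P : F) : a != 0 -> b != 0 -> c != 0 -> b != c ->
  (d - a) * (b - c) = P ->
  [/\ d * c = c * a + c / a * P / (b / a - c / a),
      d * b = b * a + b / a * P / (b / a - c / a),
      d / c = 1 / (c / a) + P / ((c / a) * (b * a - c * a))
    & d / b = 1 / (b / a) + P / ((b / a) * (b * a - c * a))].
Proof.
move=> an bn cn bc H; have bc' : b - c != 0 by rewrite subr_eq0.
have E : b / a - c / a = (b - c) / a by rewrite mulrBl.
have E2 : b * a - c * a = (b - c) * a by rewrite mulrBl.
rewrite E E2 -H; split; field; rewrite ?bc' ?an ?bn ?cn //.
Qed.
Arguments key2 {F a b c d P}.

Lemma part1_facts (F : fieldType) (p q : int -> F) (u v s t : int -> int -> F) :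
  mH1_nondeg u v s t -> mH1_system p q u v s t -> mH1_constraint u v s t ->
  forall m n,
  [/\ u m n != 0, v m n = t m n * u m n / s m n,
      s m (n+1) * t m n = t (m+1) n * s m n,
      u (m+1) n / s (m+1) n = s m n ^+2 * (u m n / s m n)
    & u m (n+1) / s m (n+1) = t m n ^+2 * (u m n / s m n)].
Proof.
move=> nd sys con.
have hv : forall m n, v m n = t m n * u m n / s m n.
  move=> m n; have [sn _ _ _] := nd m n; rewrite con; field; exact: sn.
move=> m n.
have [sn tn st uv] := nd m n.
have st' : s m n - t m n != 0 by rewrite subr_eq0.
have uv' : u m n - v m n != 0 by rewrite subr_eq0.
have un : u m n != 0.
  apply: contraNneq uv => u0; rewrite (hv m n) u0; by rewrite mulr0 mul0r.
have [e1 e2 e3 e4] := sys m n.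
have hW : u m n - v m n = (s m n - t m n) * u m n / s m n.
  rewrite (hv m n); field; exact: sn.
have [sn1 tn1 _ _] := nd (m+1) n.
have NZ : (s m n - t m n) * u m n + (p m - q n) * s m n != 0.
  have ht1 : t (m+1) n = ((s m n - t m n) * u m n + (p m - q n) * s m n) / (s m n * ((s m n - t m n) * u m n)).
    rewrite e4 hW; field; by rewrite st' un sn.
  by move: tn1; rewrite ht1; apply: contraNneq => ->; rewrite mul0r.
split => //.
- rewrite e3 e4; field. by rewrite uv' tn sn.
- have -> : u (m+1) n / s (m+1) n = v (m+1) n / t (m+1) n.
    rewrite (hv (m+1) n); field; by rewrite sn1 tn1.
  rewrite e2 e4 hW; field. rewrite NZ st' un sn //=.
- rewrite e1 e3 hW (hv m n); field. rewrite NZ st' un sn tn //=.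
Qed.

Arguments part1_facts {F p q u v s t}.

Theorem proposition3p5 (F : closedFieldType) (p q : int -> F)
    (u v s t : int -> int -> F) :
  mH1_nondeg u v s t ->
  mH1_system p q u v s t ->
  mH1_constraint u v s t ->
  (exists x : int -> int -> F, is_potential x u v s t /\ H1 p q x) /\
  (forall x : int -> int -> F,
      (forall m n : int, x m n != 0) ->
      (forall m n : int, x (m + 1) n != x m (n + 1)) ->
      (mH1_system p q (fun m n => x (m + 1) n * x m n)
                      (fun m n => x m (n + 1) * x m n)
                      (fun m n => x (m + 1) n / x m n)
                      (fun m n => x m (n + 1) / x m n)
       <-> H1 p q x)).
Proof.
move=> nd sys con; split; last first.
  move=> x xn xne; split.
    move=> S m n; have [e1 _ _ _] := S m n.
    exact: ((key1 (xn m n) (xn m (n+1)) (xne m n)).1 e1).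
  move=> H m n.
  have := key2 (xn m n) (xn (m+1) n) (xn m (n+1)) (xne m n) (H m n).
  by case=> e1 e2 e3 e4; split.
have fa := part1_facts nd sys con.
have [c0 hc0] : exists c, c ^+ 2 = u 0 0 / s 0 0.
  have [c hc] := @solve_monicpoly F 2 (fun i => if i == 0%N then u 0 0 / s 0 0 else 0) isT.
  exists c; rewrite hc big_ord_recr big_ord_recr big_ord0 /=.
  by rewrite add0r mul0r addr0 expr0 mulr1.
have c0n : c0 != 0.
  have [un _ _ _ _] := fa 0 0; have [sn _ _ _] := nd 0 0.
  apply: contraNneq un => c00; have : u 0 0 / s 0 0 == 0 by rewrite -hc0 c00 expr0n.
  by rewrite mulf_eq0 invr_eq0 (negbTE sn) orbF.
pose R := recf (fun k => s k 0) c0.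
pose x := fun m n => recf (t m) (R m) n.
have snz : forall m n, s m n != 0 by move=> m n; have [] := nd m n.
have tnz : forall m n, t m n != 0 by move=> m n; have [] := nd m n.
have hA : forall m n, x m (n + 1) = t m n * x m n.
  by move=> m n; rewrite /x (recfS (tnz m)).
have hB : forall m n, x (m + 1) n = s m n * x m n.
  move=> m; apply: (rec_uniq (tnz (m+1))).
  - by rewrite /x !recf0 /R (recfS (fun k => snz k 0)).
  - by move=> n; rewrite hA.
  - move=> n; rewrite hA mulrA; have [_ _ -> _ _] := fa m n.
    by rewrite mulrA.
have hall : forall P : int -> int -> Prop, P 0 0 ->
    (forall m n, P m n <-> P (m + 1) n) -> (forall m n, P m n <-> P m (n + 1)) ->
    forall m n, P m n.
  move=> P P0 H1' H2' m n.
  have Hm : forall m, P m 0 by apply: int_ind_iff.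
  move: n; apply: int_ind_iff; [exact: Hm | exact: H2'].
have xnz : forall m n, x m n != 0.
  apply: hall.
  - by rewrite /x /R !recf0.
  - move=> m n; rewrite hB mulf_eq0 negb_or snz //.
  - move=> m n; rewrite hA mulf_eq0 negb_or tnz //.
have hx2 : forall m n, u m n / s m n = x m n ^+ 2.
  apply: hall.
  - by rewrite /x /R !recf0.
  - move=> m n; have [_ _ _ -> _] := fa m n; rewrite hB exprMn.
    split=> [->//|]; apply: mulfI; by rewrite expf_neq0.
  - move=> m n; have [_ _ _ _ ->] := fa m n; rewrite hA exprMn.
    split=> [->//|]; apply: mulfI; by rewrite expf_neq0.
have hu : forall m n, u m n = s m n * x m n ^+ 2.
  by move=> m n; rewrite -hx2; field; exact: snz.
have hv : forall m n, v m n = t m n * x m n ^+ 2.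
  by move=> m n; have [_ -> _ _ _] := fa m n; rewrite hu; field; exact: snz.
exists x; split.
  move=> m n; split => //.
  - by rewrite hu hB; ring.
  - by rewrite hv hA; ring.
  - by rewrite hB; field; exact: xnz.
  - by rewrite hA; field; exact: xnz.
move=> m n.
have [sn tn st uv] := nd m n.
have st' : s m n - t m n != 0 by rewrite subr_eq0.
have [_ _ _ e4] := sys m n.
rewrite (hA (m+1) n) (hB m n) (hA m n) e4 (hu m n) (hv m n).
have E : s m n * x m n ^+ 2 - t m n * x m n ^+ 2 = (s m n - t m n) * x m n ^+ 2 by ring.
rewrite E; field. by rewrite st' sn xnz.
Qed.
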